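(* Let $\mathcal G$ be a finite group whose action on $\mathrm{Her}_{\tilde{\mathcal V}}$ satisfies $g\cdot I_{\tilde{\mathcal V}}=I_{\tilde{\mathcal V}}$ for all $g\in\mathcal G$. Assume $\mathcal S=\mathcal S_G$ and that Problem (P) is $\mathcal G$-symmetric. Assume further that for each $t\in\{1,\dots,T\}$ there is a subgroup $\mathcal H^{(t)}\subseteq\mathcal G$ and an irreducible projective (unitary or anti-unitary) representation $\mathcal H^{(t)}\ni h\mapsto U'_{h,t}$ on $\mathcal V_t$ such that for all $h\in\mathcal H^{(t)}$ and $X\in\mathrm{Her}_{\tilde{\mathcal V}}$, $$\mathrm{Tr}_{\mathcal W_T\otimes\mathcal V_T\otimes\cdots\otimes\mathcal V_{t+1}\otimes\mathcal W_t}(h\cdot X)=(\mathrm{Ad}_{U'_{h,t}}\otimes\mathrm{id}_{\mathcal W_{t-1}\otimes\mathcal V_{t-1}\otimes\cdots\otimes\mathcal W_1\otimes\mathcal V_1})\big(\mathrm{Tr}_{\mathcal W_T\otimes\mathcal V_T\otimes\cdots\otimes\mathcal V_{t+1}\otimes\mathcal W_t}X\big).$$ Then the optimal value of Problem (P) equals the optimal value obtained when $\mathcal S$ is replaced by $\mathcal S_\Psi:=\{I_{\tilde{\mathcal V}}/\prod_{t=1}^TN_{\mathcal V_t}\}$, i.e. $\sup_{\Phi\in\mathsf P}P(\Phi)=\sup\{P(\Phi):\Phi\in\mathcal C,\ \sum_m\Phi_m=I_{\tilde{\mathcal V}}/\prod_{t}N_{\mathcal V_t},\ \eta_j(\Phi)\le0\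 \forall j\}$.
   Context: Standing setup. All Hilbert spaces are finite-dimensional complex. Fix an integer $T\ge1$ and systems $\mathcal V_1,\dots,\mathcal V_T,\mathcal W_1,\dots,\mathcal W_T$; set $\mathcal W_0:=\mathbb C$ and $\tilde{\mathcal V}:=\mathcal W_T\otimes\mathcal V_T\otimes\cdots\otimes\mathcal W_1\otimes\mathcal V_1$. $N_{\mathcal X}$ is the dimension of $\mathcal X$; $\mathrm{Her}_{\mathcal X}$ is the real Hilbert space of Hermitian operators on $\mathcal X$ with inner product $\langle X,Y\rangle=\mathrm{Tr}(XY)$, $\mathrm{Pos}_{\mathcal X}$ the positive semidefinite operators, $I_{\mathcal X}$ the identity, $\mathrm{Tr}_{\mathcal X}$ partial trace; $\overline A$ is closure. $\mathcal I_n:=\{0,\dots,n-1\}$. $\mathcal S_G$ is the set of operators $I_{\mathcal W_T}\otimes\tau_T$ where $\tau_t\in\mathrm{Pos}_{\mathcal V_t\otimes\mathcal W_{t-1}\otimes\mathcal V_{t-1}\otimes\cdots\otimes\mathcal W_1\otimes\mathcal V_1}$ ($t=1,\dots,T$) satisfy $\mathrm{Tr}\,\tau_1=1$ and $\mathrm{Tr}_{\mathcal V_t}\tau_t=I_{\mathcal W_{t-1}}\otimes\tau_{t-1}$ for $2\le t\le T$. Fix $M\ge2$; $\mathcal C_G:=\mathrm{Pos}_{\tilde{\mathcal V}}^M$; $\mathcal T_G:=\{\Phi=\{\Phi_m\}_{m=0}^{M-1}\in\mathcal C_G:\sum_m\Phi_m\in\mathcal S_G\}$. Data: $J\ge0$,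 $c_m,a_{j,m}\in\mathrm{Her}_{\tilde{\mathcal V}}$, $b_j\in\mathbb R$; $\eta_j(\Phi):=\sum_m\langle\Phi_m,a_{j,m}\rangle-b_j$, $P(\Phi):=\sum_m\langle\Phi_m,c_m\rangle$. $\mathcal T$ is a nonempty convex subset of $\mathcal T_G$, $\mathsf P:=\{\Phi\in\mathcal T:\eta_j(\Phi)\le0\ \forall j\}$ (assumed to satisfy $\overline{\mathsf P}=\{\Phi\in\overline{\mathcal T}:\eta_j(\Phi)\le0\ \forall j\}$); $\mathcal C\subseteq\mathcal C_G$ a closed convex cone and $\mathcal S\subseteq\mathcal S_G$ a closed convex set with $\overline{\mathcal T}=\{\Phi\in\mathcal C:\sum_m\Phi_m\in\mathcal S\}$. Problem (P): maximize $P(\Phi)$ over $\Phi\in\mathsf P$ (value $\sup$, $-\infty$ if empty). Symmetry: for a finite group $\mathcal G$, Problem (P) is $\mathcal G$-symmetric if (a) there are group actions $x\mapsto g\cdot x$ (with $(gh)\cdot x=g\cdot(h\cdot x)$, $e\cdot x=x$) of $\mathcal G$ on $\mathcal I_M$, on $\mathcal I_J$ and on $\mathrm{Her}_{\tilde{\mathcal V}}$; (b) each map $x\mapsto g\cdot x$ on $\mathrm{Her}_{\tilde{\mathcal V}}$ is linear with $\langle g\cdot x,g\cdot y\rangle=\langle x,y\rangle$; (c) for all $g,j,m$: $\Phi^{(g)}\in\mathcal T$ for $\Phi\in\mathcal T$, $\Phi^{(g)}\in\mathcal C$ for $\Phi\in\mathcal C$, $g\cdot\varphi\in\mathcal S$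 for $\varphi\in\mathcal S$, $g\cdot a_{j,m}=a_{g\cdot j,g\cdot m}$, $b_j=b_{g\cdot j}$, $g\cdot c_m=c_{g\cdot m}$, where $\Phi^{(g)}:=\{g^{-1}\cdot\Phi_{g\cdot m}\}_m$. Representations: for $U$ a unitary or anti-unitary operator on $\mathcal X$, $\mathrm{Ad}_U(X):=UXU^\dagger$. A map $h\mapsto U_h$ from a group to unitary or anti-unitary operators on $\mathcal X$ is a projective (unitary or anti-unitary) representation if $\mathrm{Ad}_{U_e}=\mathrm{id}$ and $\mathrm{Ad}_{U_h}\circ\mathrm{Ad}_{U_{h'}}=\mathrm{Ad}_{U_{hh'}}$ for all $h,h'$; it is irreducible if the only subspaces of $\mathcal X$ invariant under all $U_h$ are $\{0\}$ and $\mathcal X$. *)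

(* Defs.v *)
From HB Require Import structures.
From mathcomp Require Import all_boot all_order all_algebra all_fingroup.
From mathcomp Require Import complex.
From mathcomp Require Import boolp classical_sets reals constructive_ereal ereal.
Set Implicit Arguments. Unset Strict Implicit. Unset Printing Implicit Defensive.
Import Order.TTheory GRing.Theory Num.Theory.
Local Open Scope ring_scope.
Local Open Scope classical_set_scope.

(* Linear algebra on a finite-dimensional complex Hilbert space whose        *)
(* orthonormal basis is indexed by a finite type A.  The scalars are         *)
Section LinAlg.
Variable R : realType.
Local Notation C := (complex R).

Definition op (A : finType) := A -> A -> C.
Definition vec (A : finType) := A -> C.

Definition rC (r : R) : C := Complex r 0.

Definition opI (A : finType) : op A := fun i j => (i == j)%:R.
Definition op0 (A : finType) : op A := fun _ _ => 0.
Definition opadd (A : finType) (X Y : op A) : op A := fun i j => X i j + Y i j.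
Definition opscale (A : finType) (r : R) (X : op A) : op A := fun i j => rC r * X i j.
Definition opmul (A : finType) (X Y : op A) : op A :=
  fun i j => \sum_(k : A) X i k * Y k j.
Definition adj (A : finType) (X : op A) : op A := fun i j => conjc (X j i).
Definition opconj (A : finType) (X : op A) : op A := fun i j => conjc (X i j).
Definition tr (A : finType) (X : op A) : C := \sum_(i : A) X i i.
(* Hilbert-Schmidt inner product <X,Y> = Tr (X Y) on Hermitian operators *)
Definition hs (A : finType) (X Y : op A) : C := tr (opmul X Y).
Definition herm (A : finType) (X : op A) : Prop := forall i j, X i j = conjc (X j i).
Definition psd (A : finType) (X : op A) : Prop :=
  herm X /\ forall v : vec A, 0 <= \sum_(i : A) \sum_(j : A) conjc (v i) * X i j * v j.
Definition apply (A : finType) (X : op A) (v : vec A) : vec A :=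
  fun i => \sum_(j : A) X i j * v j.

(* tensor product and partial trace over / partial transpose of the LEFT factor *)
Definition tens (A B : finType) (X : op A) (Y : op B) : op (A * B)%type :=
  fun p q => X p.1 q.1 * Y p.2 q.2.
Definition trL (A B : finType) (X : op (A * B)%type) : op B :=
  fun b b' => \sum_(a : A) X (a, b) (a, b').
Definition ptransL (A B : finType) (X : op (A * B)%type) : op (A * B)%type :=
  fun p q => X (q.1, p.2) (p.1, q.2).

(* (W, false) is the unitary W; (W, true) is the anti-unitary W o K where K is
   complex conjugation in the computational basis. *)
Definition uop (A : finType) := (op A * bool)%type.
Definition is_uop (A : finType) (U : uop A) : Prop :=
  opmul U.1 (adj U.1) = @opI A /\ opmul (adj U.1) U.1 = @opI A.
Definition uapply (A : finType) (U : uop A) (v : vec A) : vec A :=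
  apply U.1 (if U.2 then (fun i => conjc (v i)) else v).
Definition Ad (A : finType) (U : uop A) (X : op A) : op A :=
  opmul (opmul U.1 (if U.2 then opconj X else X)) (adj U.1).
(* Ad_U (x) id on Her(A (x) B): the real-linear extension; for anti-unitary U
   it acts as W (.)^T W^dagger on the A factor, i.e. via the partial transpose. *)
Definition Ad_id (A B : finType) (U : uop A) (Y : op (A * B)%type) : op (A * B)%type :=
  opmul (opmul (tens U.1 (@opI B)) (if U.2 then ptransL Y else Y)) (adj (tens U.1 (@opI B))).

Definition subspace (A : finType) (P : vec A -> Prop) : Prop :=
  P (fun _ => 0) /\ (forall u v, P u -> P v -> P (fun i => u i + v i)) /\
  (forall (a : C) v, P v -> P (fun i => a * v i)).

Definition proj_rep (gT : finGroupType) (H : {group gT}) (A : finType)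
    (U : gT -> uop A) : Prop :=
  (forall h, h \in H -> is_uop (U h)) /\
  (forall X, Ad (U 1%g) X = X) /\
  (forall h h', h \in H -> h' \in H -> forall X, Ad (U h) (Ad (U h') X) = Ad (U (h * h')%g) X).

Definition irreducible_rep (gT : finGroupType) (H : {group gT}) (A : finType)
    (U : gT -> uop A) : Prop :=
  forall P : vec A -> Prop, subspace P ->
    (forall h, h \in H -> forall v, P v -> P (uapply (U h) v)) ->
    (forall v, P v -> v = (fun _ => 0)) \/ (forall v, P v).

Definition tup (M : nat) (A : finType) := 'I_M -> op A.
Definition tsum (M : nat) (A : finType) (Phi : tup M A) : op A :=
  fun i j => \sum_(m < M) Phi m i j.
(* closure in the (finite-dimensional, hence unique) norm topology *)
Definition tclosure (M : nat) (A : finType) (S : set (tup M A)) : set (tup M A) :=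
  [set Phi | forall e : R, 0 < e -> exists Psi, S Psi /\
      forall m i j, `|Phi m i j - Psi m i j| < rC e].
Definition tclosed (M : nat) (A : finType) (S : set (tup M A)) : Prop :=
  tclosure S `<=` S.
Definition tconvex (M : nat) (A : finType) (S : set (tup M A)) : Prop :=
  forall Phi Psi (l : R), S Phi -> S Psi -> 0 <= l <= 1 ->
    S (fun m => opadd (opscale l (Phi m)) (opscale (1 - l) (Psi m))).
Definition tcone (M : nat) (A : finType) (S : set (tup M A)) : Prop :=
  forall Phi (l : R), S Phi -> 0 <= l -> S (fun m => opscale l (Phi m)).
Definition oclosed (A : finType) (S : set (op A)) : Prop :=
  forall X, (forall e : R, 0 < e -> exists Y, S Y /\ forall i j, `|X i j - Y i j| < rC e) -> S X.
Definition oconvex (A : finType) (S : set (op A)) : Prop :=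
  forall X Y (l : R), S X -> S Y -> 0 <= l <= 1 -> S (opadd (opscale l X) (opscale (1 - l) Y)).

End LinAlg.
Arguments opI {R} A _ _.

(* The tensor structure.  dV t, dW t are the dimensions of V_t, W_t.         *)
(*   Jt t = index type of  W_t (x) V_t (x) ... (x) W_1 (x) V_1   (Jt 0 = C)  *)
(*   Kt t = index type of  V_{t+1} (x) W_t (x) V_t (x) ... (x) W_1 (x) V_1   *)
(* so Jt T is the index type of tilde V, Jt t.+1 = W_{t+1} * Kt t, and       *)
(* Kt t = V_{t+1} * Jt t.  (Kt t is the space of tau_{t+1}.)                *)
Fixpoint Jt (dV dW : nat -> nat) (t : nat) : finType :=
  match t with
  | 0 => unit
  | t'.+1 => ('I_(dW t'.+1) * ('I_(dV t'.+1) * Jt dV dW t'))%type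
  end.
Definition Kt (dV dW : nat -> nat) (t : nat) : finType := ('I_(dV t.+1) * Jt dV dW t)%type.

Section Tensor.
Variable R : realType.
Variables dV dW : nat -> nat.
Local Notation J := (Jt dV dW).
Local Notation K := (Kt dV dW).

Definition castJ (m n : nat) (e : m = n) (X : op R (J m)) : op R (J n) :=
  ecast k (op R (J k)) e X.

(* trace out W_{t+n}, V_{t+n}, ..., W_{t+1}, V_{t+1} *)
Fixpoint down (n t : nat) : op R (J (n + t)) -> op R (J t) :=
  match n return op R (J (n + t)) -> op R (J t) with
  | 0 => fun X => X
  | n'.+1 => fun X => @down n' t (trL (trL (X : op R (J (n' + t).+1))))
  end.

(* Tr_{W_T V_T ... V_{t+2} W_{t+1}} X, an operator on V_{t+1} (x) W_t (x) ... (x) V_1 *)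
Definition outer_tr (T t : nat) (lt : (t < T)%N) (X : op R (J T)) : op R (K t) :=
  trL (@down (T - t.+1)%N t.+1 (castJ (esym (subnK lt)) X)).

(* The set S_G of (rescaled) deterministic strategies/combs: I_{W_T} (x) tau_T.
   tau t here stands for tau_{t+1}, an operator on Kt t. *)
Definition SG (T : nat) : op R (J T) -> Prop :=
  match T return op R (J T) -> Prop with
  | 0 => fun _ => False
  | T'.+1 => fun X => exists tau : forall t : nat, op R (K t),
      (forall t, (t < T'.+1)%N -> psd (tau t)) /\
      tr (tau 0) = 1 /\
      (forall t, (t.+1 < T'.+1)%N -> trL (tau t.+1) = tens (opI _) (tau t)) /\
      X = tens (opI _) (tau T')
  end.

Definition NVprod (T : nat) : nat := (\prod_(t < T) dV t.+1)%N.

End Tensor.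

Definition left_action (gT : finGroupType) (X : Type) (act : gT -> X -> X) : Prop :=
  (forall x, act 1%g x = x) /\ (forall g h x, act (g * h)%g x = act g (act h x)).

Section Sym.
Variable R : realType.
Variable gT : finGroupType.
Variable A : finType.

(* an action of gT on Her_A by linear maps preserving <X,Y> = Tr(XY);
   hact is only constrained on Hermitian arguments *)
Definition her_action (hact : gT -> op R A -> op R A) : Prop :=
  (forall g X, herm X -> herm (hact g X)) /\
  (forall X, herm X -> hact 1%g X = X) /\
  (forall g h X, herm X -> hact (g * h)%g X = hact g (hact h X)) /\
  (forall g (r s : R) X Y, herm X -> herm Y ->
      hact g (opadd (opscale r X) (opscale s Y)) =
      opadd (opscale r (hact g X)) (opscale s (hact g Y))) /\
  (forall g X Y, herm X -> herm Y -> hs (hact g X) (hact g Y) = hs X Y).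

Variables (M Jn : nat).
Definition tact (hact : gT -> op R A -> op R A) (actM : gT -> 'I_M -> 'I_M)
    (g : gT) (Phi : tup R M A) : tup R M A :=
  fun m => hact g^-1%g (Phi (actM g m)).

(* <Phi, a_j> - b_j  and the objective  P(Phi) (real parts of real numbers) *)
Definition eta_j (a : 'I_Jn -> 'I_M -> op R A) (b : 'I_Jn -> R) (j : 'I_Jn)
    (Phi : tup R M A) : R :=
  complex.Re (\sum_(m < M) hs (Phi m) (a j m)) - b j.
Definition Pobj (c : 'I_M -> op R A) (Phi : tup R M A) : R :=
  complex.Re (\sum_(m < M) hs (Phi m) (c m)).

Definition G_symmetric (Tset Cset : set (tup R M A)) (Sset : set (op R A))
    (a : 'I_Jn -> 'I_M -> op R A) (b : 'I_Jn -> R) (c : 'I_M -> op R A)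
    (actM : gT -> 'I_M -> 'I_M) (actJ : gT -> 'I_Jn -> 'I_Jn)
    (hact : gT -> op R A -> op R A) : Prop :=
  left_action actM /\ left_action actJ /\ her_action hact /\
  (forall g Phi, Tset Phi -> Tset (tact hact actM g Phi)) /\
  (forall g Phi, Cset Phi -> Cset (tact hact actM g Phi)) /\
  (forall g phi, Sset phi -> Sset (hact g phi)) /\
  (forall g j m, hact g (a j m) = a (actJ g j) (actM g m)) /\
  (forall g j, b j = b (actJ g j)) /\
  (forall g m, hact g (c m) = c (actM g m)).
End Sym.

(* Main.v *)
Require Import Defs.
From HB Require Import structures.
From mathcomp Require Import all_boot all_order all_algebra all_fingroup.
From mathcomp Require Import complex.
From mathcomp Require Import boolp classical_sets reals constructive_ereal ereal.
From mathcomp Require Import ring lra.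
Import Order.TTheory GRing.Theory Num.Theory.
Local Open Scope ring_scope.
Local Open Scope classical_set_scope.


Section Basic.
Variable R : realType.
Local Notation C := (R[i]).

Lemma ReD (x y : C) : complex.Re (x + y) = complex.Re x + complex.Re y.
Proof. case: x => a b; case: y => c d. reflexivity. Qed.
Lemma ReM_rC (r : R) (z : C) : complex.Re (rC r * z) = r * complex.Re z.
Proof. case: z => x y /=. by rewrite mul0r subr0. Qed.
Lemma conjc_sum (I : Type) (s : seq I) (F : I -> C) :
  conjc (\sum_(i <- s) F i) = \sum_(i <- s) conjc (F i).
Proof. exact: rmorph_sum. Qed.
Lemma conjcM (x y : C) : conjc (x * y) = conjc x * conjc y.
Proof. exact: rmorphM. Qed.
Lemma conjcK' (x : C) : conjc (conjc x) = x.
Proof. exact: conjcK. Qed.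

Lemma apply_mul (A : finType) (X Y : op R A) v :
  apply (opmul X Y) v = apply X (apply Y v).
Proof.
apply: boolp.funext => i; rewrite /apply /opmul.
under eq_bigr do rewrite big_distrl /=.
rewrite exchange_big; apply: eq_bigr => k _; rewrite big_distrr; apply: eq_bigr => j _ /=.
by rewrite mulrA.
Qed.

Lemma apply_opI (A : finType) (v : vec R A) : apply (opI A) v = v.
Proof.
apply: boolp.funext => i; rewrite /apply /opI (bigD1 i) //= eqxx mul1r big1 ?addr0 //.
by move=> j; rewrite eq_sym => /negbTE ->; rewrite mul0r.
Qed.

Lemma apply_scale (A : finType) (X : op R A) (l : C) v :
  apply X (fun i => l * v i) = (fun i => l * apply X v i).
Proof.
apply: boolp.funext => i; rewrite /apply big_distrr; apply: eq_bigr => j _.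
by rewrite mulrCA.
Qed.

Lemma apply_conj (A : finType) (X : op R A) v :
  apply (opconj X) (fun i => conjc (v i)) = (fun i => conjc (apply X v i)).
Proof.
apply: boolp.funext => i; rewrite /apply conjc_sum; apply: eq_bigr => j _.
by rewrite conjcM.
Qed.

Lemma schur_herm n (gT : finGroupType) (H : {group gT}) (U : gT -> uop R 'I_n)
    (X : op R 'I_n) :
  (0 < n)%N -> (forall h, h \in H -> is_uop (U h)) -> irreducible_rep H U -> herm X ->
  (forall h, h \in H -> Ad (U h) X = X) ->
  exists l : C, forall i j, X i j = l * (i == j)%:R.
Proof.
move=> n0 huop hirr hX hinv.
pose Am := \matrix_(i, j) X j i : 'M[C]_n.
have [l] : exists l, root (char_poly Am) l.
  by apply/closed_rootP; rewrite size_char_poly eqSS -lt0n.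
rewrite -eigenvalue_root_char => /eigenvalueP [v vA vnz].
pose vf := fun i => v ord0 i.
have eig : forall i, apply X vf i = l * vf i.
  move=> i; have := congr1 (fun M : 'M[C]_(1,n) => M ord0 i) vA; rewrite !mxE => <-.
  rewrite /apply; apply: eq_bigr => j _; by rewrite mxE mulrC.
have [k hk] : exists k, vf k != 0.
  apply/existsP; apply: contraR vnz => /existsPn H0; apply/eqP/rowP => i.
  by rewrite !mxE; apply/eqP; exact: (negbNE (H0 _)).
have lreal : conjc l = l.
  pose s := \sum_i conjc (vf i) * vf i.
  have s0 : s != 0.
    have ge0 : forall i, 0 <= conjc (vf i) * vf i by move=> i; rewrite mulrC mulcJ_ge0.
    apply/negP => /eqP /psumr_eq0P H0.
    have := H0 (fun i _ => ge0 i) k isT; move/eqP; rewrite mulf_eq0 conjc_eq0 orbb.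
    by apply/negP.
  have hs : conjc s = s.
    rewrite /s conjc_sum; apply: eq_bigr => i _; by rewrite conjcM conjcK mulrC.
  have hq : conjc (l * s) = l * s.
    have -> : l * s = \sum_i conjc (vf i) * apply X vf i.
      rewrite /s big_distrr; apply: eq_bigr => i _; by rewrite eig mulrCA.
    rewrite conjc_sum /apply; under eq_bigr do rewrite conjcM conjcK conjc_sum big_distrr.
    rewrite exchange_big; apply: eq_bigr => i _; rewrite big_distrr; apply: eq_bigr => j _ /=.
    rewrite conjcM -hX; ring.
  move: hq; rewrite conjcM hs => /eqP; rewrite -subr_eq0 -mulrBl mulf_eq0 (negbTE s0) orbF.
  by rewrite subr_eq0 => /eqP.
pose P := fun u : vec R 'I_n => forall i, apply X u i = l * u i.
have sP : Defs.subspace P.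
  rewrite /Defs.subspace; split; [|split].
  - move=> i; rewrite /apply big1 ?mulr0 // => j _; by rewrite mulr0.
  - move=> u w Pu Pw i; rewrite /apply.
    under eq_bigr do rewrite mulrDr.
    by rewrite big_split /= -/(apply X u i) -/(apply X w i) Pu Pw mulrDr.
  - move=> a w Pw i; by rewrite apply_scale Pw mulrCA.
have invP : forall h, h \in H -> forall u, P u -> P (uapply (U h) u).
  move=> h hh u Pu.
  have [W1 W2] := huop h hh.
  have hXh := hinv h hh.
  rewrite /uapply; move: hXh W1 W2; rewrite /Ad; case: (U h) => W anti /= hXh W1 W2.
  have key : forall u', apply X (apply W u') =
      apply W (apply (if anti then opconj X else X) u').
    move=> u'; rewrite -{1}hXh !apply_mul -(apply_mul _ (adj W) W u') W2 apply_opI.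
    done.
  move=> i; rewrite key.
  have -> : apply (if anti then opconj X else X) (if anti then (fun i => conjc (u i)) else u)
      = (fun i => l * (if anti then (fun i => conjc (u i)) else u) i).
    case: anti {key hXh} => /=.
      rewrite apply_conj; apply: boolp.funext => j; by rewrite Pu conjcM lreal.
    by apply: boolp.funext => j; rewrite Pu.
  by rewrite apply_scale.
case: (hirr P sP invP) => [H0|Hall].
  by move: hk; rewrite (H0 vf eig) eqxx.
exists l => i j.
have := Hall (fun k => (k == j)%:R) i; rewrite /apply (bigD1 j) //= eqxx mulr1 big1 ?addr0 //.
by move=> k0 /negbTE ->; rewrite mulr0.
Qed.

End Basic.


Set Implicit Arguments. Unset Strict Implicit. Unset Printing Implicit Defensive.

Section Block.
Variable R : realType.
Local Notation C := (R[i]).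
Implicit Types (A B : finType).

Definition trn A (X : op R A) : op R A := fun i j => X j i.
Definition cs A (c : C) (X : op R A) : op R A := fun i j => c * X i j.
Definition phi A (U : uop R A) (X : op R A) : op R A :=
  opmul (opmul U.1 (if U.2 then trn X else X)) (adj U.1).

Lemma opmul_addl A (X Y Z : op R A) : opmul (opadd X Y) Z = opadd (opmul X Z) (opmul Y Z).
Proof.
apply: boolp.funext => i; apply: boolp.funext => j; rewrite /opmul /opadd -big_split.
by apply: eq_bigr => k _; rewrite mulrDl.
Qed.
Lemma opmul_addr A (X Y Z : op R A) : opmul Z (opadd X Y) = opadd (opmul Z X) (opmul Z Y).
Proof.
apply: boolp.funext => i; apply: boolp.funext => j; rewrite /opmul /opadd -big_split.
by apply: eq_bigr => k _; rewrite mulrDr.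
Qed.
Lemma opmul_csl A c (X Z : op R A) : opmul (cs c X) Z = cs c (opmul X Z).
Proof.
apply: boolp.funext => i; apply: boolp.funext => j; rewrite /opmul /cs big_distrr.
by apply: eq_bigr => k _ /=; rewrite mulrA.
Qed.
Lemma opmul_csr A c (X Z : op R A) : opmul Z (cs c X) = cs c (opmul Z X).
Proof.
apply: boolp.funext => i; apply: boolp.funext => j; rewrite /opmul /cs big_distrr.
by apply: eq_bigr => k _ /=; rewrite mulrCA.
Qed.
Lemma adj_opmul A (X Y : op R A) : adj (opmul X Y) = opmul (adj Y) (adj X).
Proof.
apply: boolp.funext => i; apply: boolp.funext => j; rewrite /opmul /adj conjc_sum.
by apply: eq_bigr => k _; rewrite conjcM mulrC.
Qed.
Lemma adjK A (X : op R A) : adj (adj X) = X.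
Proof. apply: boolp.funext => i; apply: boolp.funext => j; by rewrite /adj conjcK. Qed.

Lemma opmulA A (X Y Z : op R A) : opmul X (opmul Y Z) = opmul (opmul X Y) Z.
Proof.
apply: boolp.funext => i; apply: boolp.funext => j; rewrite /opmul.
under eq_bigr do rewrite big_distrr /=.
under [RHS]eq_bigr do rewrite big_distrl /=.
rewrite exchange_big; apply: eq_bigr => k _; apply: eq_bigr => l _; by rewrite mulrA.
Qed.

Lemma phi_add A U (X Y : op R A) : phi U (opadd X Y) = opadd (phi U X) (phi U Y).
Proof.
rewrite /phi; have -> : (if U.2 then trn (opadd X Y) else opadd X Y) =
  opadd (if U.2 then trn X else X) (if U.2 then trn Y else Y) by case: U.2.
by rewrite opmul_addr opmul_addl.
Qed.
Lemma phi_cs A U c (X : op R A) : phi U (cs c X) = cs c (phi U X).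
Proof.
rewrite /phi; have -> : (if U.2 then trn (cs c X) else cs c X) =
  cs c (if U.2 then trn X else X) by case: U.2.
by rewrite opmul_csr opmul_csl.
Qed.
Lemma phi_adj A U (X : op R A) : phi U (adj X) = adj (phi U X).
Proof.
rewrite /phi !adj_opmul adjK opmulA; congr (opmul (opmul _ _) _).
by case: U.2.
Qed.
Lemma phi_herm A U (X : op R A) : herm X -> phi U X = Ad U X.
Proof.
move=> hX; rewrite /phi /Ad; case: U.2 => //; congr (opmul (opmul _ _) _).
apply: boolp.funext => i; apply: boolp.funext => j; by rewrite /trn /opconj hX.
Qed.

Definition blk n B (Y : op R ('I_n * B)%type) (b b' : B) : op R 'I_n :=
  fun u u' => Y (u, b) (u', b').

Lemma sum_pair A B (F : (A * B)%type -> C) :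
  \sum_(p : (A * B)%type) F p = \sum_a \sum_b F (a, b).
Proof. by rewrite pair_big; apply: eq_bigr => [[a b]]. Qed.

Lemma mul_tensI_l n B (W : op R 'I_n) (Y : op R ('I_n * B)%type) v b q :
  opmul (tens W (opI B)) Y (v, b) q = \sum_u W v u * Y (u, b) q.
Proof.
rewrite /opmul sum_pair; apply: eq_bigr => u _.
rewrite (bigD1 b) //= big1 ?addr0; first by rewrite /tens /opI /= eqxx mulr1.
by move=> b0 hb; rewrite /tens /opI /= eq_sym (negbTE hb) mulr0 mul0r.
Qed.

Lemma mul_adj_tensI_r n B (W : op R 'I_n) (Y : op R ('I_n * B)%type) p v b :
  opmul Y (adj (tens W (opI B))) p (v, b) = \sum_u Y p (u, b) * conjc (W v u).
Proof.
rewrite /opmul sum_pair; apply: eq_bigr => u _.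
rewrite (bigD1 b) //= big1 ?addr0; first by rewrite /adj /tens /opI /= eqxx mulr1.
by move=> b0 hb; rewrite /adj /tens /opI /= eq_sym (negbTE hb) mulr0 conjc0 mulr0.
Qed.

Lemma Ad_id_blk n B (U : uop R 'I_n) (Y : op R ('I_n * B)%type) b b' v v' :
  Ad_id U Y (v, b) (v', b') = phi U (blk Y b b') v v'.
Proof.
rewrite /Ad_id mul_adj_tensI_r /phi {2}/opmul /adj.
apply: eq_bigr => u' _; congr (_ * _); rewrite mul_tensI_l /opmul.
apply: eq_bigr => u _; congr (_ * _).
by case: U.2.
Qed.

End Block.

Section Schur2.
Variable R : realType.
Local Notation C := (R[i]).

Lemma conjcD (x y : C) : conjc (x + y) = conjc x + conjc y.
Proof. exact: rmorphD. Qed.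
Lemma conjcN (x : C) : conjc (- x) = - conjc x.
Proof. exact: rmorphN. Qed.
Lemma conjc_one : conjc (1 : C) = 1.
Proof. exact: rmorph1. Qed.

Lemma conjc_i : conjc ('i%C : C) = - 'i%C.
Proof. by apply/eqP; rewrite eq_complex /= oppr0 !eqxx. Qed.
Lemma i_mul_i : ('i%C : C) * 'i%C = -1.
Proof. by rewrite -expr2 sqr_i. Qed.

Lemma schur_tens n (B : finType) (gT : finGroupType) (H : {group gT}) (U : gT -> uop R 'I_n)
    (Y : op R ('I_n * B)%type) (n0 : (0 < n)%N) :
  (forall h, h \in H -> is_uop (U h)) -> irreducible_rep H U -> herm Y ->
  (forall h, h \in H -> Ad_id (U h) Y = Y) ->
  Y = tens (opI 'I_n) (fun b b' => Y (Ordinal n0, b) (Ordinal n0, b')).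
Proof.
move=> huop hirr hY hinv.
have key : forall b b', exists mu : C, forall v v', Y (v, b) (v', b') = mu * (v == v')%:R.
  move=> b b'; pose A := blk Y b b'.
  have hA : forall h, h \in H -> phi (U h) A = A.
    move=> h hh; apply: boolp.funext => v; apply: boolp.funext => v'.
    by rewrite -Ad_id_blk hinv.
  pose B1 := opadd A (adj A).
  pose B2 := cs 'i%C (opadd A (cs (-1) (adj A))).
  have hB1 : herm B1.
    by move=> i j; rewrite /B1 /opadd /adj conjcD conjcK addrC.
  have hB2 : herm B2.
    move=> i j; rewrite /B2 /cs /opadd /adj conjcM conjcD conjcM conjcK conjc_i.
    rewrite conjcN conjc_one; ring.
  have iB1 : forall h, h \in H -> Ad (U h) B1 = B1.
    by move=> h hh; rewrite -phi_herm // /B1 phi_add phi_adj hA.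
  have iB2 : forall h, h \in H -> Ad (U h) B2 = B2.
    by move=> h hh; rewrite -phi_herm // /B2 phi_cs phi_add phi_cs phi_adj hA.
  have [l1 e1] := @schur_herm _ _ _ _ _ B1 n0 huop hirr hB1 iB1.
  have [l2 e2] := @schur_herm _ _ _ _ _ B2 n0 huop hirr hB2 iB2.
  exists (2%:R^-1 * (l1 - 'i%C * l2)) => v v'.
  have h2 : (2%:R : C) * A v v' = B1 v v' - 'i%C * B2 v v'.
    rewrite /B1 /B2 /opadd /cs mulrA i_mul_i; ring.
  have h2' : (2%:R : C) * A v v' = (l1 - 'i%C * l2) * (v == v')%:R.
    by rewrite h2 e1 e2; ring.
  have n2 : (2%:R : C) != 0 by rewrite pnatr_eq0.
  rewrite -[LHS](mulKf n2) -/(blk Y b b' v v') -/A h2'; ring.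
apply: boolp.funext => [[v b]]; apply: boolp.funext => [[v' b']].
have [mu hmu] := key b b'.
by rewrite /tens /opI /= !hmu eqxx mulr1 mulrC.
Qed.

End Schur2.


Set Implicit Arguments. Unset Strict Implicit. Unset Printing Implicit Defensive.

Section OpLemmas.
Variable R : realType.
Local Notation C := (R[i]).

Lemma cs_cs (A : finType) (a b : C) (Y : op R A) : cs a (cs b Y) = cs (a * b) Y.
Proof. by apply: boolp.funext => i; apply: boolp.funext => j; rewrite /cs mulrA. Qed.
Lemma cs1 (A : finType) (Y : op R A) : cs 1 Y = Y.
Proof. by apply: boolp.funext => i; apply: boolp.funext => j; rewrite /cs mul1r. Qed.
Lemma cs_inj (A : finType) (a : C) (Y Z : op R A) : a != 0 -> cs a Y = cs a Z -> Y = Z.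
Proof.
move=> a0 e; have := congr1 (cs a^-1) e; by rewrite !cs_cs mulVf // !cs1.
Qed.
Lemma tens_II (A B : finType) : tens (opI A) (opI B) = opI (R:=R) (A * B)%type.
Proof.
apply: boolp.funext => [[a b]]; apply: boolp.funext => [[a' b']].
rewrite /tens /opI /= xpair_eqE; by case: (a == a'); case: (b == b'); rewrite /= ?mulr1 ?mulr0 ?mul0r.
Qed.
Lemma tens_cs (A B : finType) (X : op R A) c (Y : op R B) : tens X (cs c Y) = cs c (tens X Y).
Proof. by apply: boolp.funext => p; apply: boolp.funext => q; rewrite /tens /cs mulrCA. Qed.
Lemma trL_cs (A B : finType) c (Y : op R (A * B)%type) : trL (cs c Y) = cs c (trL Y).
Proof. by apply: boolp.funext => p; apply: boolp.funext => q; rewrite /trL /cs big_distrr. Qed.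
Lemma trL_tensI (A B : finType) (Y : op R B) : trL (tens (opI A) Y) = cs (#|A|%:R) Y.
Proof.
apply: boolp.funext => p; apply: boolp.funext => q; rewrite /trL /tens /opI /cs /=.
under eq_bigr do rewrite eqxx mul1r.
by rewrite sumr_const mulr_natl.
Qed.
Lemma ptransL_cs (A B : finType) c (Y : op R (A * B)%type) : ptransL (cs c Y) = cs c (ptransL Y).
Proof. by []. Qed.
Lemma Ad_id_cs (A B : finType) (U : uop R A) c (Y : op R (A * B)%type) :
  Ad_id U (cs c Y) = cs c (Ad_id U Y).
Proof.
rewrite /Ad_id; have -> : (if U.2 then ptransL (cs c Y) else cs c Y) =
   cs c (if U.2 then ptransL Y else Y) by case: U.2.
by rewrite opmul_csr opmul_csl.
Qed.
End OpLemmas.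

Section Struct.
Variable R : realType.
Local Notation C := (R[i]).
Variables dV dW : nat -> nat.
Local Notation J := (Jt dV dW).
Local Notation K := (Kt dV dW).

Unset Implicit Arguments.
Definition Xf (tau : forall t, op R (K t)) (k : nat) : op R (J k) :=
  match k return op R (J k) with
  | 0 => fun _ _ => 0
  | k'.+1 => tens (opI _) (tau k')
  end.

Set Implicit Arguments.
Lemma castXf tau m n (e : m = n) : castJ e (Xf tau m) = Xf tau n.
Proof. by case: n / e. Qed.

Lemma down_cs n t c (Y : op R (J (n + t))) :
  @Defs.down R dV dW n t (cs c Y) = cs c (@Defs.down R dV dW n t Y).
Proof.
elim: n t c Y => [|n IH] t c Y //=.
by rewrite !trL_cs IH.
Qed.

Lemma down_Xf (T : nat) (tau : forall t, op R (K t))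
  (htr : forall t, (t.+1 < T)%N -> trL (tau t.+1) = tens (opI _) (tau t))
  (hdW : forall t, (0 < t <= T)%N -> (0 < dW t)%N) :
  forall n t, (0 < t)%N -> (n + t <= T)%N ->
  exists c : C, c != 0 /\ @Defs.down R dV dW n t (Xf tau (n + t)) = cs c (Xf tau t).
Proof.
elim=> [|n IH] t t0 hnt.
  by exists 1; split; [exact: oner_neq0 | rewrite cs1].
have e : trL (trL (Xf tau (n + t).+1)) = cs ((dW (n + t).+1)%:R) (Xf tau (n + t)).
  rewrite /= trL_tensI card_ord trL_cs.
  case E : (n + t)%N => [|s]; first by have := ltn_addl n t0; rewrite E.
  rewrite /= htr //; by rewrite -E -addSn.
have [c [c0 hc]] := IH t t0 (ltnW hnt).
exists ((dW (n + t).+1)%:R * c); split.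
  rewrite mulf_neq0 // pnatr_eq0 -lt0n; apply: hdW.
  by rewrite /= -addSn hnt.
change (@Defs.down R dV dW n t (trL (trL (Xf tau (n + t).+1))) = cs ((dW (n + t).+1)%:R * c) (Xf tau t)).
by rewrite e down_cs hc cs_cs mulrC.
Qed.

End Struct.
Arguments Xf {R dV dW} tau k _ _.

Section Struct2.
Variable R : realType.
Local Notation C := (R[i]).
Variables dV dW : nat -> nat.
Local Notation J := (Jt dV dW).
Local Notation K := (Kt dV dW).

Lemma outer_tr_Xf T' (tau : forall t, op R (K t))
  (htr : forall t, (t.+1 < T'.+1)%N -> trL (tau t.+1) = tens (opI _) (tau t))
  (hdW : forall t, (0 < t <= T'.+1)%N -> (0 < dW t)%N) t (lt : (t < T'.+1)%N) :
  exists c : C, c != 0 /\ outer_tr lt (Xf tau T'.+1) = cs c (tau t).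
Proof.
rewrite /outer_tr castXf.
have hle : (T'.+1 - t.+1 + t.+1 <= T'.+1)%N by rewrite subnK.
have [c [c0 hc]] := @down_Xf R dV dW T'.+1 tau htr hdW (T'.+1 - t.+1) t.+1 isT hle.
rewrite hc trL_cs /= trL_tensI card_ord cs_cs.
exists (c * (dW t.+1)%:R); split => //.
by rewrite mulf_neq0 // pnatr_eq0 -lt0n; apply: hdW.
Qed.

Lemma rC_invn (n : nat) : rC (n%:R^-1 : R) = (n%:R : C)^-1.
Proof.
change (real_complex R (n%:R^-1) = (n%:R : C)^-1).
by rewrite fmorphV rmorph_nat.
Qed.

Lemma opscale_cs (A : finType) (r : R) (X : op R A) : opscale r X = cs (rC r) X.
Proof. by []. Qed.

Lemma SG_sym_I T (hdV : forall t, (0 < t <= T)%N -> (0 < dV t)%N)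
  (hdW : forall t, (0 < t <= T)%N -> (0 < dW t)%N)
  (gT : finGroupType) (H : nat -> {group gT}) (U : forall t : nat, gT -> uop R 'I_(dV t.+1))
  (hrep : forall t : 'I_T, proj_rep (H t) (U t))
  (hirr : forall t : 'I_T, irreducible_rep (H t) (U t))
  (X : op R (J T)) :
  SG X ->
  (forall (t : 'I_T) h, h \in H t ->
     Ad_id (U t h) (outer_tr (ltn_ord t) X) = outer_tr (ltn_ord t) X) ->
  X = opscale ((NVprod dV T)%:R^-1) (opI _).
Proof.
case: T hdV hdW hrep hirr X => [|T'] hdV hdW hrep hirr X //=.
move=> [tau [hpsd [htr0 [htr hX]]]] hinv.
have hXf : X = Xf tau T'.+1 by [].
have hblk : forall t (lt : (t < T'.+1)%N),
    tau t = tens (opI _) (fun b b' => tau t (Ordinal (hdV t.+1 lt), b) (Ordinal (hdV t.+1 lt), b')).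
  move=> t lt.
  have [c [c0 hc]] := outer_tr_Xf htr hdW (ltn_ord (Ordinal lt)).
  have hi := hinv (Ordinal lt).
  rewrite hXf hc /= in hi.
  apply: (@schur_tens R (dV t.+1) (J t) gT (H t) (U t) (tau t)).
  - by move=> h hh; exact: ((hrep (Ordinal lt)).1 h hh).
  - exact: (hirr (Ordinal lt)).
  - exact: (hpsd t lt).1.
  - move=> h hh; apply: (cs_inj c0); by rewrite -Ad_id_cs hi.
pose kt t := ((\prod_(s < t.+1) dV s.+1)%N%:R : C)^-1.
have claim : forall t, (t < T'.+1)%N -> tau t = cs (kt t) (opI _).
  elim=> [|t IH] lt.
    set z := tau 0 (Ordinal (hdV 1 lt), tt) (Ordinal (hdV 1 lt), tt).
    have hz : tau 0 = cs z (opI _).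
      rewrite {1}(hblk 0 lt) -tens_II -tens_cs; congr tens.
      by apply: boolp.funext => -[]; apply: boolp.funext => -[]; rewrite /cs /opI /= mulr1.
    have d0 : ((dV 1)%:R : C) != 0 by rewrite pnatr_eq0 -lt0n; apply: (hdV _); rewrite /= ?lt //.
    have e : z * (dV 1)%:R = 1.
      move: htr0; rewrite hz /tr /cs -big_distrr /= /opI.
      under eq_bigr do rewrite eqxx.
      by rewrite sumr_const card_prod card_ord card_unit muln1.
    rewrite hz /kt big_ord1; congr cs.
    by apply: (mulIf d0); rewrite e mulVf.
  have hZ := hblk t.+1 lt.
  set Z := (fun b b' => _) in hZ.
  have e := htr t lt.
  rewrite hZ trL_tensI card_ord (IH (ltnW lt)) tens_cs tens_II in e.
  have d0 : ((dV t.+2)%:R : C) != 0 by rewrite pnatr_eq0 -lt0n; apply: (hdV _); rewrite /= ?lt //.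
  have eZ : Z = cs (((dV t.+2)%:R)^-1 * kt t) (opI _).
    apply: (cs_inj d0); by rewrite e cs_cs mulrA mulfV // mul1r.
  rewrite hZ eZ tens_cs tens_II; congr cs.
  by rewrite /kt [in RHS]big_ord_recr /= [in RHS]natrM invfM mulrC.
rewrite hX (claim T' (ltnSn T')) tens_cs tens_II opscale_cs rC_invn.
by [].
Qed.
End Struct2.


Set Implicit Arguments. Unset Strict Implicit. Unset Printing Implicit Defensive.

Section Avg.
Variable R : realType.
Local Notation C := (R[i]).
Variables (A : finType) (M : nat).

Lemma rCM (x y : R) : rC (x * y) = rC x * rC y.
Proof. exact: (rmorphM (real_complex R)). Qed.
Lemma Re_sum (I : Type) (s : seq I) (F : I -> C) :
  complex.Re (\sum_(i <- s) F i) = \sum_(i <- s) complex.Re (F i).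
Proof. elim: s => [|x s IH]; first by rewrite !big_nil. by rewrite !big_cons ReD IH. Qed.
Lemma Re_sumo (n : nat) (F : 'I_n -> C) :
  complex.Re (\sum_(i < n) F i) = \sum_(i < n) complex.Re (F i).
Proof. exact: Re_sum. Qed.
Lemma rC1 : rC (1 : R) = 1. Proof. by []. Qed.

Definition avgs (I : Type) (s : seq I) (F : I -> tup R M A) : tup R M A :=
  fun m i j => rC ((size s)%:R^-1) * \sum_(g <- s) F g m i j.

Lemma conv_avg (I : Type) (S : set (tup R M A)) (s : seq I) (F : I -> tup R M A) :
  tconvex S -> (0 < size s)%N -> (forall g, S (F g)) -> S (avgs s F).
Proof.
move=> hconv; elim: s => [//|g s IH] _ hF.
case: s IH => [|g' s] IH.
  suff -> : avgs [:: g] F = F g by [].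
  apply: boolp.funext => m; apply: boolp.funext => i; apply: boolp.funext => j.
  by rewrite /avgs /= big_cons big_nil addr0 invr1 mul1r.
set k := size (g' :: s).
have k0 : (k%:R : R) != 0 by rewrite pnatr_eq0.
have k10 : ((k.+1)%:R : R) != 0 by rewrite pnatr_eq0.
have := hconv (F g) (avgs (g' :: s) F) ((k.+1)%:R^-1) (hF g) (IH isT hF).
have -> : (fun m => opadd (opscale (k.+1)%:R^-1 (F g m))
            (opscale (1 - (k.+1)%:R^-1) (avgs (g' :: s) F m))) = avgs [:: g, g' & s] F.
  apply: boolp.funext => m; apply: boolp.funext => i; apply: boolp.funext => j.
  rewrite /avgs /opadd /opscale -/k [in RHS]big_cons.
  have -> : size [:: g, g' & s] = k.+1 by [].
  rewrite mulrA -rCM.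
  have -> : (1 - (k.+1)%:R^-1) * k%:R^-1 = ((k.+1)%:R^-1 : R).
    rewrite -[k.+1]addn1 natrD; field.
    by rewrite k0 andbT natr1.
  by rewrite mulrDr.
apply; rewrite invr_ge0 ler0n /= invf_le1 // ?ltr0n // ler1n //.
Qed.

Definition Lf (d : 'I_M -> op R A) (Phi : tup R M A) : R :=
  complex.Re (\sum_(m < M) hs (Phi m) (d m)).

Lemma hs_scale (X Y : op R A) (c : C) : hs (fun i j => c * X i j) Y = c * hs X Y.
Proof.
rewrite /hs /tr /opmul big_distrr; apply: eq_bigr => i _.
rewrite big_distrr; apply: eq_bigr => k _ /=; by rewrite mulrA.
Qed.
Lemma hs_add (X Z Y : op R A) : hs (fun i j => X i j + Z i j) Y = hs X Y + hs Z Y.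
Proof.
rewrite /hs /tr /opmul -big_split; apply: eq_bigr => i _.
rewrite -big_split; apply: eq_bigr => k _ /=; by rewrite mulrDl.
Qed.
Lemma hs_sum (I : Type) (s : seq I) (X : I -> op R A) (Y : op R A) :
  hs (fun i j => \sum_(g <- s) X g i j) Y = \sum_(g <- s) hs (X g) Y.
Proof.
elim: s => [|g s IH].
  rewrite big_nil /hs /tr /opmul big1 // => i _; rewrite big1 // => k _; by rewrite big_nil mul0r.
rewrite big_cons -IH -hs_add; congr hs.
by apply: boolp.funext => i; apply: boolp.funext => j; rewrite big_cons.
Qed.

Lemma Lf_avgs (I : Type) d (s : seq I) (F : I -> tup R M A) :
  Lf d (avgs s F) = (size s)%:R^-1 * \sum_(g <- s) Lf d (F g).
Proof.
rewrite /Lf /avgs -Re_sum -ReM_rC; congr complex.Re.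
under eq_bigr do rewrite hs_scale hs_sum.
by rewrite -big_distrr /= exchange_big.
Qed.

End Avg.

Section Grp.
Variable R : realType.
Local Notation C := (R[i]).
Variables (gT : finGroupType) (A : finType) (M : nat).
Variable hact : gT -> op R A -> op R A.
Variable actM : gT -> 'I_M -> 'I_M.
Hypothesis ha : her_action hact.
Hypothesis hM : left_action actM.

Lemma hact_herm g X : herm X -> herm (hact g X).
Proof. exact: ha.1. Qed.
Lemma hactM g h X : herm X -> hact (g * h)%g X = hact g (hact h X).
Proof. exact: ha.2.2.1. Qed.
Lemma hact1 X : herm X -> hact 1%g X = X.
Proof. exact: ha.2.1. Qed.
Lemma hactK g X : herm X -> hact g (hact g^-1 X) = X.
Proof. by move=> hX; rewrite -hactM // mulgV hact1. Qed.
Lemma hs_hact g X Y : herm X -> herm Y -> hs (hact g X) (hact g Y) = hs X Y.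
Proof. exact: ha.2.2.2.2. Qed.

Lemma actM_inj g : injective (actM g).
Proof.
move=> x y e; have := congr1 (actM g^-1) e.
by rewrite -!hM.2 mulVg !hM.1.
Qed.

Lemma Lf_tact (d d' : 'I_M -> op R A) g (Phi : tup R M A) :
  (forall m, herm (d m)) -> (forall m, herm (Phi m)) ->
  (forall m, hact g (d m) = d' (actM g m)) ->
  Lf d (tact hact actM g Phi) = Lf d' Phi.
Proof.
move=> hd hPhi hdd; rewrite /Lf /tact; congr complex.Re.
transitivity (\sum_(m < M) hs (Phi (actM g m)) (d' (actM g m))).
  apply: eq_bigr => m _.
  rewrite -(@hs_hact g (hact g^-1 (Phi (actM g m))) (d m)); [|exact: hact_herm|exact: hd].
  by rewrite hactK // hdd.
by rewrite [RHS](reindex_inj (@actM_inj g)).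
Qed.

Lemma herm_add (X Y : op R A) : herm X -> herm Y -> herm (opadd X Y).
Proof. by move=> hX hY i j; rewrite /opadd hX hY conjcD. Qed.
Lemma herm_sum (I : Type) (s : seq I) (Z : I -> op R A) :
  (forall k, herm (Z k)) -> herm (fun i j => \sum_(k <- s) Z k i j).
Proof.
move=> hZ i j; rewrite conjc_sum; apply: eq_bigr => k _; exact: hZ.
Qed.
Lemma herm0 : herm (fun _ _ : A => 0 : C).
Proof. by move=> i j; rewrite conjc0. Qed.

Lemma opadd_scale0 (r : R) (Y : op R A) : opadd (opscale r Y) (opscale 0 Y) = opscale r Y.
Proof.
apply: boolp.funext => i; apply: boolp.funext => j; rewrite /opadd /opscale.
have -> : rC (0 : R) = 0 by []. by rewrite mul0r addr0.
Qed.
Lemma opscale1 (Y : op R A) : opscale 1 Y = Y.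
Proof. apply: boolp.funext => i; apply: boolp.funext => j; by rewrite /opscale rC1 mul1r. Qed.

Lemma hact_scale g r X : herm X -> hact g (opscale r X) = opscale r (hact g X).
Proof.
move=> hX; have := ha.2.2.2.1 g r 0 X X hX hX.
by rewrite !opadd_scale0.
Qed.
Lemma hact_add g X Y : herm X -> herm Y -> hact g (opadd X Y) = opadd (hact g X) (hact g Y).
Proof.
move=> hX hY; have := ha.2.2.2.1 g 1 1 X Y hX hY.
by rewrite !opscale1.
Qed.
Lemma hact0 g : hact g (fun _ _ => 0) = (fun _ _ => 0).
Proof.
have e : opscale (0 : R) (fun _ _ : A => 0 : C) = (fun _ _ => 0).
  by apply: boolp.funext => i; apply: boolp.funext => j; rewrite /opscale mulr0.
have := hact_scale g 0 herm0; rewrite e => ->.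
by apply: boolp.funext => i; apply: boolp.funext => j; rewrite /opscale; have -> : rC (0 : R) = 0 by []; rewrite mul0r.
Qed.
Lemma hact_sum g (I : Type) (s : seq I) (Z : I -> op R A) :
  (forall k, herm (Z k)) ->
  hact g (fun i j => \sum_(k <- s) Z k i j) = (fun i j => \sum_(k <- s) hact g (Z k) i j).
Proof.
move=> hZ; elim: s => [|k s IH].
  under eq_fun do under eq_fun do rewrite big_nil.
  rewrite hact0; by apply: boolp.funext => i; apply: boolp.funext => j; rewrite big_nil.
have -> : (fun i j => \sum_(k0 <- k :: s) Z k0 i j) = opadd (Z k) (fun i j => \sum_(k0 <- s) Z k0 i j).
  by apply: boolp.funext => i; apply: boolp.funext => j; rewrite big_cons.
rewrite hact_add // ?IH; last exact: herm_sum.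
by apply: boolp.funext => i; apply: boolp.funext => j; rewrite big_cons.
Qed.

Definition avgG (Phi : tup R M A) : tup R M A :=
  avgs (enum gT) (fun g => tact hact actM g Phi).

Lemma tsum_avgG (Phi : tup R M A) :
  tsum (avgG Phi) = opscale (#|gT|%:R^-1)
     (fun i j => \sum_(g : gT) \sum_(m < M) hact g^-1 (Phi (actM g m)) i j).
Proof.
apply: boolp.funext => i; apply: boolp.funext => j.
rewrite /tsum /avgG /avgs /opscale -cardE -big_distrr /= exchange_big /= big_enum /=.
by [].
Qed.

Lemma avgG_sym (Phi : tup R M A) h : (forall m, herm (Phi m)) ->
  hact h (tsum (avgG Phi)) = tsum (avgG Phi).
Proof.
move=> hPhi; rewrite tsum_avgG hact_scale; last first.
  apply: herm_sum => g; apply: herm_sum => m; exact: hact_herm.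
congr opscale.
rewrite hact_sum; last by move=> g; apply: herm_sum => m; exact: hact_herm.
apply: boolp.funext => i; apply: boolp.funext => j.
transitivity (\sum_(g : gT) \sum_(m < M) hact (h * g^-1)%g (Phi (actM g m)) i j).
  apply: eq_bigr => g _; rewrite hact_sum; last by move=> m; exact: hact_herm.
  by apply: eq_bigr => m _; rewrite hactM.
rewrite (reindex_inj (mulIg h)) /=; apply: eq_bigr => g _.
rewrite invMg mulKVg.
under eq_bigr do rewrite hM.2.
by rewrite [RHS](reindex_inj (@actM_inj h)).
Qed.
End Grp.


Set Implicit Arguments. Unset Strict Implicit. Unset Printing Implicit Defensive.

Section SGI.
Variable R : realType.
Local Notation C := (R[i]).
Variables dV dW : nat -> nat.
Local Notation J := (Jt dV dW).
Local Notation K := (Kt dV dW).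

Lemma psd_csI (A : finType) (k : R) : 0 <= k -> psd (cs (rC k) (opI (R:=R) A)).
Proof.
move=> k0; split.
  move=> i j; rewrite /cs /opI conjcM conjc_nat eq_sym.
  by have -> : conjc (rC k) = rC k by apply/eqP; rewrite eq_complex /= oppr0 !eqxx.
move=> v.
have -> : \sum_i \sum_j conjc (v i) * cs (rC k) (opI A) i j * v j =
          \sum_i rC k * (v i * conjc (v i)).
  apply: eq_bigr => i _; rewrite (bigD1 i) //= big1 ?addr0.
    by rewrite /cs /opI eqxx mulr1; ring.
  by move=> j hj; rewrite /cs /opI eq_sym (negbTE hj) mulr0 mulr0 mul0r.
apply: sumr_ge0 => i _; apply: mulr_ge0; last exact: mulcJ_ge0.
by rewrite lecE /= eqxx k0.
Qed.

Lemma SG_I T (hdV : forall t, (0 < t <= T)%N -> (0 < dV t)%N) : (0 < T)%N ->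
  SG (opscale ((NVprod dV T)%:R^-1) (opI (R:=R) (J T))).
Proof.
case: T hdV => [//|T'] hdV _ /=.
pose kt t := (((\prod_(s < t.+1) dV s.+1)%N)%:R^-1 : R).
exists (fun t => cs (rC (kt t)) (opI (K t))).
split; [|split; [|split]].
- move=> t _; apply: psd_csI; by rewrite /kt invr_ge0 ler0n.
- rewrite /tr /cs /opI; under eq_bigr do rewrite eqxx mulr1.
  rewrite sumr_const card_prod card_ord card_unit muln1 /kt big_ord1 rC_invn /= -[X in X = 1]mulr_natr mulVf //.
  by rewrite pnatr_eq0 -lt0n; apply: (hdV 1).
- move=> t lt.
  rewrite -tens_II tens_cs trL_cs trL_tensI card_ord cs_cs tens_II; congr cs.
  rewrite /kt !rC_invn [in X in X * _]big_ord_recr /= natrM invfM -mulrA mulVf ?mulr1 //.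
  by rewrite pnatr_eq0 -lt0n; apply: (hdV _); rewrite /= lt.
- rewrite tens_cs tens_II opscale_cs; congr cs.
Qed.
End SGI.


Set Implicit Arguments. Unset Strict Implicit. Unset Printing Implicit Defensive.

Section Approx.
Variable R : realType.
Local Notation C := (R[i]).
Variables (A : finType) (M : nat).

Lemma approx (c : 'I_M -> op R A) (Phi : tup R M A) (S : set (tup R M A)) :
  tclosure S Phi -> forall e : R, 0 < e -> exists Psi, S Psi /\ Pobj c Phi <= Pobj c Psi + e.
Proof.
move=> hcl e e0.
pose K : C := \sum_(m < M) \sum_i \sum_k `|c m k i|.
have K0 : 0 <= K by do 3! (apply: sumr_ge0 => ? _).
pose Kr := complex.Re K.
have hK : K = rC Kr by rewrite /Kr; apply/esym/RRe_real/ger0_real.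
have Kr0 : 0 <= Kr by move: K0; rewrite hK lecR.
pose e' := e / (Kr + 1).
have Kr1 : 0 < Kr + 1 by rewrite ltr_wpDl.
have e'0 : 0 < e' by rewrite divr_gt0.
have [Psi [hS hPsi]] := hcl e' e'0.
exists Psi; split => //.
pose D := fun m => (fun i j => Phi m i j - Psi m i j) : op R A.
pose z := \sum_(m < M) hs (D m) (c m).
have hdiff : Pobj c Phi - Pobj c Psi = complex.Re z.
  rewrite /Pobj.
  have -> : \sum_(m < M) hs (Phi m) (c m) = z + \sum_(m < M) hs (Psi m) (c m).
    rewrite /z -big_split; apply: eq_bigr => m _ /=; rewrite -hs_add; congr hs.
    by apply: boolp.funext => i; apply: boolp.funext => j; rewrite /D subrK.
  by rewrite ReD addrK.
have hz : `|z| <= rC e' * K.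
  apply: le_trans (ler_norm_sum _ _ _) _.
  rewrite /K !big_distrr /=; apply: ler_sum => m _.
  rewrite /hs /tr /opmul; apply: le_trans (ler_norm_sum _ _ _) _.
  rewrite big_distrr /=; apply: ler_sum => i _.
  apply: le_trans (ler_norm_sum _ _ _) _.
  rewrite big_distrr /=; apply: ler_sum => k _.
  rewrite normrM; apply: ler_wpM2r => //; exact: ltW (hPsi m i k).
have key : complex.Re z <= e' * Kr.
  rewrite -lecR; apply: (le_trans _ (le_trans (normc_ge_Re z) _)).
    by rewrite lecR ler_norm.
  apply: le_trans hz _; rewrite hK -rCM; exact: lexx.
have : e' * Kr <= e.
  rewrite /e' mulrAC ler_pdivrMr // ler_wpM2l ?ltW //. lra.
lra.
Qed.
End Approx.


Set Implicit Arguments. Unset Strict Implicit. Unset Printing Implicit Defensive.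

Theorem proposition2
  (R : realType) (gT : finGroupType)
  (T : nat) (hT : (0 < T)%N) (dV dW : nat -> nat)
  (hdV : forall t, (0 < t <= T)%N -> (0 < dV t)%N)
  (hdW : forall t, (0 < t <= T)%N -> (0 < dW t)%N)
  (M : nat) (hM : (2 <= M)%N) (Jn : nat)
  (c : 'I_M -> op R (Jt dV dW T)) (a : 'I_Jn -> 'I_M -> op R (Jt dV dW T)) (b : 'I_Jn -> R)
  (hc : forall m, herm (c m)) (ha : forall j m, herm (a j m))
  (Tset Cset : set (tup R M (Jt dV dW T)))
  (* C_G, T_G *)
  (TG : set (tup R M (Jt dV dW T)) :=
     [set Phi | (forall m, psd (Phi m)) /\ SG (tsum Phi)])
  (Psf : set (tup R M (Jt dV dW T)) :=
     [set Phi | Tset Phi /\ forall j, eta_j a b j Phi <= 0])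
  (* standing assumptions *)
  (hTne : Tset !=set0) (hTconv : tconvex Tset) (hTsub : Tset `<=` TG)
  (hPcl : tclosure Psf = [set Phi | tclosure Tset Phi /\ forall j, eta_j a b j Phi <= 0])
  (hCsub : forall Phi, Cset Phi -> forall m, psd (Phi m))
  (hCcl : tclosed Cset) (hCconv : tconvex Cset) (hCcone : tcone Cset)
  (* S = S_G *)
  (hTcl : tclosure Tset = [set Phi | Cset Phi /\ SG (tsum Phi)])
  (* the symmetry *)
  (actM : gT -> 'I_M -> 'I_M) (actJ : gT -> 'I_Jn -> 'I_Jn)
  (hact : gT -> op R (Jt dV dW T) -> op R (Jt dV dW T))
  (hsym : G_symmetric Tset Cset (@SG R dV dW T) a b c actM actJ hact)
  (hI : forall g, hact g (opI _) = opI _)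
  (* subgroups H^(t) and irreducible projective representations on V_t
     (index t : 'I_T stands for level t+1) *)
  (H : nat -> {group gT}) (U : forall t : nat, gT -> uop R 'I_(dV t.+1))
  (hrep : forall t : 'I_T, proj_rep (H t) (U t))
  (hirr : forall t : 'I_T, irreducible_rep (H t) (U t))
  (hcov : forall (t : 'I_T) h, h \in H t -> forall X, herm X ->
     outer_tr (ltn_ord t) (hact h X) = Ad_id (U t h) (outer_tr (ltn_ord t) X)) :
  ereal_sup [set (Pobj c Phi)%:E | Phi in Psf] =
  ereal_sup [set (Pobj c Phi)%:E | Phi in
     [set Phi | Cset Phi /\
        tsum Phi = opscale (NVprod dV T)%:R^-1 (opI (Jt dV dW T)) /\
        forall j, eta_j a b j Phi <= 0]].
Proof.
have [hMa [hJa [hact_a [hTinv [hCinv [hSinv [haeq [hbeq hceq]]]]]]]] := hsym.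
set RHS := [set Phi | Cset Phi /\ _ /\ _].
have hTcl0 : forall Phi, Tset Phi -> tclosure Tset Phi.
  move=> Phi hPhi e e0; exists Phi; split => // m i j.
  by rewrite subrr normr0 ltcE /= eqxx e0.
have herm_psd : forall (A : finType) (X : op R A), psd X -> herm X by move=> A0 X [].
have ngt0 : (0 < size (enum gT))%N by rewrite -cardE; apply/card_gt0P; exists 1%g.
have nn0 : ((size (enum gT))%:R : R) != 0 by rewrite pnatr_eq0 -lt0n.
have main : forall Phi, Psf Phi -> exists Phi', RHS Phi' /\ Pobj c Phi' = Pobj c Phi.
  move=> Phi [hTP heta].
  have [hpsdP _] := hTsub _ hTP.
  have hherm : forall m, herm (Phi m) by move=> m; exact: herm_psd _ _ (hpsdP m).
  pose Pb := avgG hact actM Phi.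
  have hTPb : Tset Pb.
    by apply: (conv_avg hTconv ngt0) => g; exact: hTinv hTP.
  have hPobj : Pobj c Pb = Pobj c Phi.
    change (Lf c Pb = Lf c Phi); rewrite /Pb /avgG Lf_avgs.
    under eq_bigr do rewrite (Lf_tact hact_a hMa (d' := c)) //.
    by rewrite big_const_seq count_predT iter_addr_0 -[Lf c Phi *+ _]mulr_natr mulrC mulfK.
  have hetaPb : forall j, eta_j a b j Pb <= 0.
    move=> j; rewrite /eta_j.
    change (Lf (a j) Pb - b j <= 0); rewrite /Pb /avgG Lf_avgs.
    under eq_bigr => g _ do rewrite (Lf_tact hact_a hMa (d' := a (actJ g j))) //.
    have hle : \sum_(g <- enum gT) Lf (a (actJ g j)) Phi <= \sum_(g <- enum gT) b j.
      apply: ler_sum => g _; have := heta (actJ g j); rewrite /eta_j -(hbeq g j) subr_le0.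
      by [].
    rewrite subr_le0; apply: le_trans (ler_wpM2l _ hle) _; first by rewrite invr_ge0 ler0n.
    by rewrite big_const_seq count_predT iter_addr_0 -[b j *+ _]mulr_natr mulrC mulfK.
  have [hpsdPb hSGPb] := hTsub _ hTPb.
  have hXherm : herm (tsum Pb).
    by apply: herm_sum => m; exact: herm_psd _ _ (hpsdPb m).
  have hsymX : forall h, hact h (tsum Pb) = tsum Pb.
    by move=> h; exact: (avgG_sym hact_a hMa).
  have hXI := SG_sym_I hdV hdW hrep hirr hSGPb
     (fun t h hh => etrans (esym (hcov t h hh (tsum Pb) hXherm)) (congr1 _ (hsymX h))).
  exists Pb; split => //; split; last by split.
  by move: (hTcl0 _ hTPb); rewrite hTcl => -[].
apply/eqP; rewrite eq_le; apply/andP; split.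
  apply: ereal_sup_le => x [Phi hPhi <-].
  have [P' [hR hP]] := main Phi hPhi.
  by exists P' => //; rewrite hP.
apply: ge_ereal_sup => x [Phi [hC [hsum heta]] <-].
have hclP : tclosure Psf Phi.
  rewrite hPcl; split => //; rewrite hTcl; split => //; rewrite hsum; exact: SG_I.
apply/lee_addgt0Pr => e e0.
have [Psi [hPsi hle]] := approx c hclP e0.
apply: (@le_trans _ _ ((Pobj c Psi)%:E + e%:E)).
  by rewrite -EFinD lee_fin.
rewrite leeD2r //; apply: ereal_sup_ubound; by exists Psi.
Qed.
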